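(* Let $(X,d)$ be a metric space, $\mu$ a non-atomic Borel measure on $X$, $f:X\to\mathbb R$ a function and $\gamma:[0,h]\to X$ a path in $\Gamma^\mu$ parametrized by $\mu$-arc length. If there is a nonnegative Borel measurable $\rho:X\to\mathbb R$ such that $|f(\gamma(s))-f(\gamma(t))|\le\int_{\gamma|_{[s,t]}}\rho<\infty$ for every $0\le s<t\le h$, then $f\circ\gamma:[0,h]\to\mathbb R$ is absolutely continuous.
   Context: A path is a continuous map $\gamma:[a,b]\to X$; a subpath is a restriction to a subinterval, trivial if that interval is a point; $\mathrm{Im}(\gamma)=\gamma([a,b])$. $\mu$ non-atomic: $\mu(\{x\})=0$ for all $x$. $\Gamma^\mu$ is the set of all non-trivial injective paths $\gamma$ with $0<\mu(\mathrm{Im}(\tilde\gamma))<\infty$ for every non-trivial subpath $\tilde\gamma$. For Borel $g\ge0$, $\int_\gamma g:=\int_{\mathrm{Im}(\gamma)}g\,d\mu$. A path $\gamma:[0,h]\to X$ in $\Gamma^\mu$ is parametrized by $\mu$-arc length if $\mu(\gamma([0,t]))=t$ for all $t\in[0,h]$. *)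

(* Defs.v *)
From HB Require Import structures.
From mathcomp Require Import all_boot all_order all_algebra.
From mathcomp Require Import all_classical all_reals all_analysis.
Set Implicit Arguments. Unset Strict Implicit. Unset Printing Implicit Defensive.
Import Order.TTheory GRing.Theory Num.Theory numFieldNormedType.Exports.
Local Open Scope classical_set_scope.
Local Open Scope ring_scope.

Notation borel X := (g_sigma_algebraType (@open X)).

(* metric spaces with a distinguished point (needed only because the library's
   generated sigma-algebra construction requires a pointed carrier; every
   space in the theorem is nonempty since it carries a path). *)
#[short(type="pmetricType")]
HB.structure Definition PointedMetric (K : numDomainType) :=
  {M of Pointed M & PseudoMetric K M & PseudoMetric_isMetric K M}.

Section defs.
Context {R : realType} {X : ptopologicalType}.
Local Notation BX := (borel X).

Definition non_atomic (mu : set BX -> \bar R) : Prop :=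
  forall x : X, mu [set x] = 0%E.

Definition is_path (gamma : R -> X) (a b : R) : Prop :=
  a <= b /\ {within [set x : R | a <= x <= b], continuous gamma}.

Definition in_Gamma_mu (mu : set BX -> \bar R) (gamma : R -> X) (a b : R)
  : Prop :=
  [/\ is_path gamma a b, a < b,
      (forall s t, a <= s <= b -> a <= t <= b -> gamma s = gamma t -> s = t)
    & forall s t, a <= s -> s < t -> t <= b ->
        (0 < mu (gamma @` `[s, t]))%E /\ (mu (gamma @` `[s, t]) < +oo)%E].

Definition mu_arc_length (mu : set BX -> \bar R) (gamma : R -> X) (h : R)
  : Prop :=
  forall t, 0 <= t <= h -> mu (gamma @` `[0, t]) = t%:E.

Definition path_integral (mu : {measure set BX -> \bar R}) (gamma : R -> X)
  (s t : R) (g : X -> R) : \bar R :=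
  (\int[mu]_(x in (gamma @` `[s, t] : set BX)) (g x)%:E)%E.

End defs.

Definition abs_continuous_on {R : realType} (F : R -> R) (a b : R) : Prop :=
  forall eps : R, 0 < eps -> exists2 delta : R, 0 < delta &
    forall (n : nat) (l r : 'I_n -> R),
      (forall i, a <= l i /\ l i < r i /\ r i <= b) ->
      (forall i j, i != j -> r i <= l j \/ r j <= l i) ->
      \sum_(i < n) (r i - l i) < delta ->
      \sum_(i < n) `|F (r i) - F (l i)| < eps.

(* Main.v *)
Require Import Defs.
From HB Require Import structures.
From mathcomp Require Import all_boot all_order all_algebra.
From mathcomp Require Import all_classical all_reals all_analysis.
From mathcomp Require Import measurable_realfun.
Import Order.TTheory GRing.Theory Num.Theory numFieldNormedType.Exports.
Local Open Scope classical_set_scope.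
Local Open Scope ring_scope.

Lemma closed_meas (R : realType) (X : pmetricType R) (A : set X) :
  closed A -> measurable (A : set (borel X)).
Proof.
move=> cA; rewrite -(setCK A); apply: measurableC.
by apply: sub_sigma_algebra; exact: closed_openC.
Qed.

Section piece.
Variables (R : realType) (X : pmetricType R) (mu : {measure set (borel X) -> \bar R}).
Variables (gamma : R -> X) (h : R).
Hypothesis cg : {within [set x : R | 0 <= x <= h], continuous gamma}.
Hypothesis ginj : forall s t, 0 <= s <= h -> 0 <= t <= h -> gamma s = gamma t -> s = t.
Hypothesis arc : mu_arc_length mu gamma h.

Lemma img_closed (l r : R) : 0 <= l -> r <= h -> closed (gamma @` `[l, r]).
Proof.
move=> l0 rh; apply: compact_closed; first exact: metric_hausdorff.
apply: continuous_compact; last exact: segment_compact.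
apply: continuous_subspaceW cg => x /=; rewrite /= in_itv /= => /andP[lx xr].
by rewrite (le_trans l0 lx) (le_trans xr rh).
Qed.

Lemma set1_meas (x : X) : measurable ([set x] : set (borel X)).
Proof.
apply: closed_meas; apply: accessible_closed_set1.
exact/hausdorff_accessible/metric_hausdorff.
Qed.

Lemma img_meas l r : 0 <= l -> r <= h -> measurable (gamma @` `[l, r] : set (borel X)).
Proof. by move=> l0 rh; apply: closed_meas; exact: img_closed. Qed.

Lemma piece_meas l r : 0 <= l -> r <= h ->
  measurable (gamma @` `[l, r] `\ gamma l : set (borel X)).
Proof. by move=> l0 rh; apply: measurableD; [exact: img_meas|exact: set1_meas]. Qed.

Lemma piece_mu l r : 0 <= l -> l <= r -> r <= h ->
  mu (gamma @` `[l, r] `\ gamma l) = (r - l)%:E.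
Proof.
move=> l0 lr rh.
have eq : gamma @` `[0, r] = gamma @` `[0, l] `|` (gamma @` `[l, r] `\ gamma l).
  apply/seteqP; split => x.
    case=> t; rewrite /= in_itv /= => /andP[t0 tr] <-.
    case: (leP t l) => tl.
      by left; exists t => //; rewrite /= in_itv /= t0 tl.
    right; split; first by exists t => //; rewrite /= in_itv /= (ltW tl) tr.
    move=> /= ge; have tl' : t = l.
      by apply: ginj ge; rewrite ?t0 ?(le_trans tr rh) ?l0 ?(le_trans lr rh).
    by move: tl; rewrite tl' ltxx.
  case.
    case=> t; rewrite /= in_itv /= => /andP[t0 tl] <-.
    by exists t => //; rewrite /= in_itv /= t0 (le_trans tl lr).
  case=> -[t]; rewrite /= in_itv /= => /andP[lt tr] <- _.
  by exists t => //; rewrite /= in_itv /= (le_trans l0 lt) tr.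
have := arc r; rewrite eq measureU.
- have al : mu (gamma @` `[0, l] : set (borel X)) = l%:E.
    by apply: arc; rewrite l0 (le_trans lr rh).
  move=> /(_ _)/wrap[]; first by rewrite (le_trans l0 lr) rh.
  move=> H0; have H : (l%:E + mu (gamma @` `[l, r] `\ gamma l : set (borel X)) = r%:E)%E.
    by rewrite -H0 -al.
  clear H0; have : ((r%:E - l%:E) = mu (gamma @` `[l, r] `\ gamma l))%E.
    by rewrite -H addeAC subee // add0e.
  by move=> <-; rewrite EFinB.
- exact: img_meas (le_trans lr rh).
- exact: piece_meas.
- apply/seteqP; split => // x [[s]]; rewrite /= in_itv /= => /andP[s0 sl] <-.
  case=> -[t]; rewrite /= in_itv /= => /andP[lt tr] ge; apply.
  have st : t = s.
    by apply: ginj ge; rewrite ?s0 ?(le_trans sl (le_trans lr rh)) ?(le_trans l0 lt) ?(le_trans tr rh).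
  rewrite -st in sl *.
  have -> : t = l by apply/eqP; rewrite eq_le sl lt.
  done.
Qed.

Hypothesis na : non_atomic mu.

Lemma piece_int (rho : X -> R) l r : 0 <= l -> l <= r -> r <= h ->
  (forall x, 0 <= rho x) -> measurable_fun (setT : set (borel X)) rho ->
  path_integral mu gamma l r rho =
  (\int[mu]_(x in (gamma @` `[l, r] `\ gamma l : set (borel X))) (rho x)%:E)%E.
Proof.
move=> l0 lr rh rho0 mrho; rewrite /path_integral.
have sub : [set gamma l] `<=` gamma @` `[l, r].
  by move=> x ->; exists l => //; rewrite /= in_itv /= lexx lr.
rewrite -{1}(setDUK sub) ge0_integral_setU.
- rewrite null_set_integral ?add0e//.
  + exact: set1_meas.
  + by apply/measurable_EFinP; apply: measurable_funS mrho.
- exact: set1_meas.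
- exact: piece_meas.
- by apply/measurable_EFinP; apply: measurable_funS mrho.
- by move=> x _; rewrite lee_fin.
- by rewrite disj_set2E setDIK.
Qed.

Lemma piece_disj l1 r1 l2 r2 : 0 <= l1 -> r1 <= h -> 0 <= l2 -> r2 <= h ->
  (r1 <= l2 \/ r2 <= l1) ->
  (gamma @` `[l1, r1] `\ gamma l1) `&` (gamma @` `[l2, r2] `\ gamma l2) = set0.
Proof.
move=> l10 r1h l20 r2h H; apply/seteqP; split => // x.
move=> [[[s]]]; rewrite /= in_itv /= => /andP[ls sr] <- ns [[t]].
rewrite /= in_itv /= => /andP[lt tr] ge nt.
have st : t = s.
  apply: ginj ge.
    by rewrite (le_trans l20 lt) (le_trans tr r2h).
  by rewrite (le_trans l10 ls) (le_trans sr r1h).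
subst t; case: H => H.
- have e : s = l2 by apply/eqP; rewrite eq_le lt (le_trans sr H).
  by apply: nt; rewrite e.
- have e : s = l1 by apply/eqP; rewrite eq_le ls (le_trans tr H).
  by apply: ns; rewrite e.
Qed.

End piece.


Theorem theorem2p4 (R : realType) (X : pmetricType R)
  (mu : {measure set (borel X) -> \bar R}) (f : X -> R)
  (gamma : R -> X) (h : R) :
  non_atomic mu ->
  in_Gamma_mu mu gamma 0 h ->
  mu_arc_length mu gamma h ->
  (exists rho : X -> R,
      (forall x, 0 <= rho x) /\
      measurable_fun (setT : set (borel X)) rho /\
      (forall s t, 0 <= s -> s < t -> t <= h ->
         (`|f (gamma s) - f (gamma t)|%:E <= path_integral mu gamma s t rho)%E /\
         (path_integral mu gamma s t rho < +oo)%E)) ->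
  abs_continuous_on (f \o gamma) 0 h.
Proof.
move=> na [[_ cg] h0 ginj gpos] arc [rho [rho0 [mrho hrho]]].
pose E := (gamma @` `[0, h] : set (borel X)).

have mE : measurable E := img_meas _ _ _ _ cg _ _ (lexx 0) (lexx h).
have intE : (\int[mu]_(x in E) (rho x)%:E < +oo)%E.
  exact: (hrho 0 h (lexx 0) h0 (lexx h)).2.
have mrhoE : measurable_fun E (EFin \o rho).
  by apply/measurable_EFinP; apply: measurable_funS mrho.
pose g := fun x : borel X => \1_E x * rho x.
have intg : mu.-integrable setT (EFin \o g).
  apply/integrableP; split.
    apply/measurable_EFinP; apply: measurable_funM => //.
  rewrite (_ : (fun x => `|(EFin \o g) x|)%E = ((EFin \o rho) \_ E)).
    by rewrite -integral_mkcond.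
  apply/funext => x; rewrite /g /patch /= indicE.
  by case: (x \in E); rewrite ?mul1r ?mul0r /= ?normr0 ?ger0_norm.
move=> eps eps0.
have [d [d0 hd]] := integral_normr_continuous intg eps0.
exists d => // n l r hlr hdisj hsum.
pose F i := (gamma @` `[l i, r i] `\ gamma (l i) : set (borel X)).
have mF i : measurable (F i).
  by have [l0 [lr rh]] := hlr i; apply: (piece_meas).
have tF : trivIset setT F.
  move=> i j _ _ [x Fx]; case: (eqVneq i j) => // /hdisj H.
  have [l0 [lr rh]] := hlr i; have [l0' [lr' rh']] := hlr j.
  have := piece_disj _ _ _ _ ginj _ _ _ _ l0 rh l0' rh' H.
  by rewrite /F => e; move: Fx; rewrite e.
pose U := \big[setU/set0]_(i < n) F i.
have mU : measurable U by apply: bigsetU_measurable.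
have UE : U `<=` E.
  rewrite /U; elim/big_ind: _ => //.
    by move=> A B AE BE x [/AE|/BE].
  move=> i _ x [[t]]; rewrite /= in_itv /= => /andP[lt tr] <- _.
  have [l0 [lr rh]] := hlr i.
  by exists t => //; rewrite /= in_itv /= (le_trans l0 lt) (le_trans tr rh).
have muU : (mu U < d%:E)%E.
  rewrite /U measure_bigsetU_ord //.
  rewrite (eq_bigr (fun i => (r i - l i)%:E)); first by rewrite sumEFin lte_fin.
  move=> i _; have [l0 [lr rh]] := hlr i.
  exact: (piece_mu _ _ _ _ _ cg ginj arc) (ltW lr) rh.
have key := hd U mU muU.
have eqU : (\int[mu]_(x in U) (`|g x|)%:E = \int[mu]_(x in U) (rho x)%:E)%E.
  apply: eq_integral => x; rewrite inE => Ux.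
  rewrite /g indicE mem_set; last exact: UE.
  by rewrite /= mulr1n mul1r ger0_norm.
have finU : (\int[mu]_(x in U) (rho x)%:E)%E \is a fin_num.
  rewrite ge0_fin_numE; last by apply: integral_ge0 => x _; rewrite lee_fin.
  apply: le_lt_trans intE; apply: ge0_subset_integral => //.
  by move=> x _; rewrite lee_fin.
have sumeq : (\sum_(i < n) \int[mu]_(x in F i) (rho x)%:E =
    \int[mu]_(x in U) (rho x)%:E)%E.
  rewrite /U ge0_integral_bigsetU //.
  - exact: index_enum_uniq.
  - by apply: sub_trivIset tF.
  - by apply/measurable_EFinP; apply: measurable_funS mrho.
  - by move=> x _; rewrite lee_fin.
rewrite -lte_fin -sumEFin.
apply: (@le_lt_trans _ _ (\sum_(i < n) \int[mu]_(x in F i) (rho x)%:E)%E).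
  apply: lee_sum => i _; have [l0 [lr rh]] := hlr i.
  rewrite /F -(piece_int _ _ _ _ _ cg na) //; last exact: ltW.
  by rewrite /= distrC; exact: (hrho _ _ l0 lr rh).1.
rewrite sumeq -eqU; move: key; rewrite /Rintegral -lte_fin fineK //.
by rewrite eqU.
Qed.
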